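(* Let $X$ be a compact metric space, $T:X\to X$ a surjective continuous map which is not one-to-one, and $f\in C(X,\mathbb{R})$. Then for each finite open cover $\mathcal{U}$ of $X$, each compact $K\subseteq X$ and all $n,m\in\mathbb{N}$, $$P_n(T,f\circ T^m,T^{-m}\mathcal{U},T^{-m}K)=P_n(T,f,\mathcal{U},K).$$
   Context: For $g\in C(X,\mathbb{R})$, $g_n=\sum_{i=0}^{n-1}g\circ T^i$. $\mathcal{C}_X$ = finite Borel covers of $X$; $\mathcal{V}\succeq\mathcal{W}$ means each element of $\mathcal{V}$ lies in some element of $\mathcal{W}$; $\mathcal{W}_0^{n-1}=\bigvee_{i=0}^{n-1}T^{-i}\mathcal{W}$; $T^{-m}\mathcal{U}=\{T^{-m}U:U\in\mathcal{U}\}$ and $T^{-m}K$ denotes the preimage. $P_n(T,g,\mathcal{W},L)=\inf\{\sum_{V\in\mathcal{V}}\sup_{x\in V\cap L}\exp g_n(x):\mathcal{V}\in\mathcal{C}_X,\ \mathcal{V}\succeq\mathcal{W}_0^{n-1}\}$, terms with $V\cap L=\emptyset$ contributing $0$. *)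

(* Defs.v *)
From HB Require Import structures.
From mathcomp Require Import all_boot all_order all_algebra.
From mathcomp Require Import all_classical all_reals all_analysis.
Set Implicit Arguments. Unset Strict Implicit. Unset Printing Implicit Defensive.
Import Order.TTheory GRing.Theory Num.Theory numFieldTopology.Exports.
Local Open Scope classical_set_scope.
Local Open Scope ring_scope.

Definition borel_set (X : topologicalType) (A : set X) : Prop :=
  <<s [set: X], open >> A.

Definition is_finite_cover (X : Type) (P : set X -> Prop) (V : set (set X)) : Prop :=
  [/\ finite_set V, (forall A, V A -> P A) & \bigcup_(A in V) A = [set: X]].

Definition bsum (X : Type) (R : realType) (T : X -> X) (g : X -> R) (n : nat) (x : X) : R :=
  \sum_(0 <= i < n) g (iter i T x).

Definition preim_family (X : Type) (S : X -> X) (U : set (set X)) : set (set X) :=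
  [set S @^-1` A | A in U].

Definition join_iter (X : Type) (T : X -> X) (W : set (set X)) (n : nat) : set (set X) :=
  [set B | exists Ws : nat -> set X, (forall i, (i < n)%N -> W (Ws i)) /\
           B = \bigcap_(i in [set i | (i < n)%N]) (iter i T @^-1` Ws i)].

Definition refines (X : Type) (V W : set (set X)) : Prop :=
  forall A, V A -> exists2 B, W B & A `<=` B.

Definition supterm (X : Type) (R : realType) (T : X -> X) (g : X -> R) (n : nat)
  (L V : set X) : R :=
  if `[< V `&` L !=set0 >] then sup [set expR (bsum T g n x) | x in V `&` L] else 0.

Definition Pn (X : topologicalType) (R : realType) (T : X -> X) (g : X -> R)
  (W : set (set X)) (L : set X) (n : nat) : R :=
  inf [set (\sum_(V \in VV) supterm T g n L V)%R | VV in
        [set VV : set (set X) | is_finite_cover (@borel_set X) VV /\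
                                refines VV (join_iter T W n)]].

(* Main.v *)
Require Import Defs.
From HB Require Import structures.
From mathcomp Require Import all_boot all_order all_algebra.
From mathcomp Require Import all_classical all_reals all_analysis.
Import Order.TTheory GRing.Theory Num.Theory numFieldTopology.Exports.
Local Open Scope classical_set_scope.
Local Open Scope ring_scope.

Section Aux.
Variables (R : realType) (X : metricType R) (T : X -> X) (f : X -> R).

Lemma borelC (A : set X) : borel_set A -> borel_set (~` A).
Proof. by move=> h; rewrite -setTD; exact: sigma_algebraCD. Qed.

Lemma borel_bigcup (F : nat -> set X) : (forall i, borel_set (F i)) ->
  borel_set (\bigcup_i F i).
Proof. exact: sigma_algebra_bigcup. Qed.

Lemma borel_open (A : set X) : open A -> borel_set A.
Proof. by move=> oA; apply: sub_gen_smallest. Qed.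

Lemma borel_closed (A : set X) : closed A -> borel_set A.
Proof. by move=> cA; rewrite -(setCK A); apply: borelC; apply: borel_open; exact: closed_openC. Qed.

Lemma borelU (A B : set X) : borel_set A -> borel_set B -> borel_set (A `|` B).
Proof.
move=> hA hB.
have -> : A `|` B = \bigcup_i (if i == 0%N then A else B).
  apply/seteqP; split => x.
    by case=> H; [exists 0%N|exists 1%N].
  by move=> [i _]; case: (i == 0%N) => H; [left|right].
by apply: borel_bigcup => i; case: (i == 0%N).
Qed.

Lemma borelI (A B : set X) : borel_set A -> borel_set B -> borel_set (A `&` B).
Proof.
move=> hA hB; rewrite -(setCK (A `&` B)) setCI.
by apply: borelC; apply: borelU; apply: borelC.
Qed.

Lemma borel_bigcap (P : set nat) (F : nat -> set X) :
  (forall i, P i -> borel_set (F i)) -> borel_set (\bigcap_(i in P) F i).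
Proof.
move=> HF.
have -> : \bigcap_(i in P) F i =
    ~` \bigcup_i ~` (if pselect (P i) is left _ then F i else setT).
  apply/seteqP; split => x.
    move=> Hx [i _]; case: pselect => /= [Pi|_] H; apply: H => //; exact: Hx.
  move=> Hx i Pi; have [//|nF] := pselect (F i x); exfalso; apply: Hx.
  by exists i => //=; case: pselect.
apply: borelC; apply: borel_bigcup => i; apply: borelC.
case: pselect => [Pi|_]; first exact: HF.
by apply: borel_open; exact: openT.
Qed.

Lemma iterC i k x : iter i T (iter k T x) = iter k T (iter i T x).
Proof. by rewrite -!iterD addnC. Qed.

Lemma bsum_comp k n x : bsum T (f \o iter k T) n x = bsum T f n (iter k T x).
Proof. by rewrite /bsum; apply: eq_bigr => i _ /=; rewrite iterC. Qed.

Lemma iter_surj k : (forall y, exists x, T x = y) ->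
  forall y, exists x, iter k T x = y.
Proof.
move=> sT; elim: k => [|k IH] y; first by exists y.
have [z <-] := sT y; have [x <-] := IH z; by exists x; rewrite iterS.
Qed.

Lemma iter_cont k : continuous T -> continuous (iter k T).
Proof.
move=> cT; elim: k => [|k IH] x /=; first exact: (@cst_continuous X X x x) || (move=> A; exact).
have -> : iter k.+1 T = T \o iter k T by apply/funext => y; rewrite iterS.
by apply: continuous_comp; [exact: IH|exact: cT].
Qed.

Lemma bsum_cont n : continuous T -> continuous f -> continuous (bsum T f n).
Proof.
move=> cT cf; elim: n => [|n IH].
  have -> : bsum T f 0 = fun=> 0 by apply/funext => x; rewrite /bsum big_geq.
  exact: cst_continuous.
have -> : bsum T f n.+1 = bsum T f n + (f \o iter n T).
  by apply/funext => x; rewrite /bsum big_nat_recr.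
move=> x; apply: continuousD; first exact: IH.
apply: continuous_comp; [exact: iter_cont|exact: cf].
Qed.

Lemma join_preim k n (U : set (set X)) A : join_iter T U n A ->
  join_iter T (preim_family (iter k T) U) n (iter k T @^-1` A).
Proof.
move=> [Ws [HW ->]]; exists (fun i => iter k T @^-1` Ws i); split.
  by move=> i /HW UW; exists (Ws i).
apply/seteqP; split => x /=.
  by move=> H i Hi; rewrite /preimage /= -iterC; exact: H.
by move=> H i Hi; have := H i Hi; rewrite /preimage /= -iterC.
Qed.

Lemma join_preim_inv k n (U : set (set X)) B :
  join_iter T (preim_family (iter k T) U) n B ->
  exists2 A, join_iter T U n A & B = iter k T @^-1` A.
Proof.
move=> [Ws [HW ->]].
have : forall i, exists A, (i < n)%N -> U A /\ Ws i = iter k T @^-1` A.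
  move=> i; case: (ltnP i n) => Hi.
    by have [A UA eq] := HW i Hi; exists A.
  by exists setT.
move/choice => [Af HAf].
exists (\bigcap_(i in [set i | (i < n)%N]) (iter i T @^-1` Af i)).
  by exists Af; split => // i Hi; exact: (HAf i Hi).1.
apply/seteqP; split => x /=.
  by move=> H i Hi; have := H i Hi; rewrite (HAf i Hi).2 /preimage /= iterC.
by move=> H i Hi; rewrite (HAf i Hi).2 /preimage /= -iterC; exact: H.
Qed.

Lemma join_measurable n (U : set (set X)) A : continuous T ->
  (forall B, U B -> open B) -> join_iter T U n A -> borel_set A.
Proof.
move=> cT oU [Ws [HW ->]]; apply: borel_bigcap => i Hi; apply: borel_open.
by move/continuousP: (iter_cont i cT); apply; exact: oU (HW i Hi).
Qed.

End Aux.
Arguments join_preim {R X T k n U A}.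
Arguments join_preim_inv {R X T k n U B}.
Arguments join_measurable {R X T n U A}.
Arguments iter_cont {R X T} k.
Arguments iter_surj {R X T} k.
Arguments bsum_cont {R X T f} n.

Lemma fsum_image_le (R : realType) (I : choiceType) (W : set I) (phi : I -> I)
  (g g' : I -> R) : finite_set W ->
  (forall B, W B -> g (phi B) <= g' B) -> (forall B, W B -> 0 <= g' B) ->
  \sum_(V \in phi @` W) g V <= \sum_(B \in W) g' B.
Proof.
move=> Wfin Hle Hge.
have : forall V, exists B, (phi @` W) V -> W B /\ phi B = V.
  move=> V; case: (pselect ((phi @` W) V)) => [[B WB <-]|nV]; first by exists B.
  by exists V.
move/choice => [sec Hsec].
have -> : \sum_(V \in phi @` W) g V = \sum_(V \in phi @` W) g (phi (sec V)).
  by apply: eq_fsbigr => V; rewrite in_setE => HV; rewrite (Hsec V HV).2.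
have inj : set_inj (phi @` W) sec.
  move=> x y; rewrite !in_setE => Hx Hy e.
  by rewrite -(Hsec x Hx).2 -(Hsec y Hy).2 e.
rewrite -(@fsbig_image _ _ _ _ _ _ _ (g \o phi) inj).
set P := sec @` (phi @` W).
have PW : P `<=` W by move=> _ [V HV <-]; exact: (Hsec V HV).1.
have Pfin : finite_set P by apply: finite_image; apply: finite_image.
apply: (@le_trans _ _ (\sum_(B \in P) g' B)).
  rewrite !fsbig_finite //= big_seq [leRHS]big_seq; apply: ler_sum => B.
  by rewrite in_fset_set // in_setE => /PW; exact: Hle.
rewrite [leRHS](fsbigID P) // setIidr // lerDl.
by apply: fsumr_ge0 => B [WB _]; exact: Hge.
Qed.

Lemma inf_eq (R : realType) (A B : set R) :
  (forall a, A a -> 0 <= a) -> (forall b, B b -> 0 <= b) ->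
  (forall b, B b -> exists2 a, A a & a <= b) ->
  (forall a, A a -> exists2 b, B b & b <= a) -> inf A = inf B.
Proof.
move=> A0 B0 BA AB.
case: (pselect (A !=set0)) => [neA|eA].
  have neB : B !=set0 by case: neA => a /AB [b Bb _]; exists b.
  have lA : has_lbound A by exists 0 => a /A0.
  have lB : has_lbound B by exists 0 => b /B0.
  apply/le_anti/andP; split.
    apply: lb_le_inf => // b /BA [a Aa ab]; exact: le_trans (ge_inf lA Aa) ab.
  apply: lb_le_inf => // a /AB [b Bb ba]; exact: le_trans (ge_inf lB Bb) ba.
have -> : A = set0 by apply/seteqP; split => // x Ax; apply: eA; exists x.
suff -> : B = set0 by [].
apply/seteqP; split => // x /BA [a Aa _]; by apply: eA; exists a.
Qed.

Section Transfer.
Variables (R : realType) (X : metricType R) (T : X -> X) (f : X -> R).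
Variables (U : set (set X)) (K : set X) (n : nat).
Hypotheses (cX : compact [set: X]) (cT : continuous T)
  (sT : forall y : X, exists x : X, T x = y) (cf : continuous f)
  (oU : forall A, U A -> open A) (cK : compact K).

Definition Covs k := [set VV : set (set X) | is_finite_cover (@borel_set X) VV /\
  refines VV (join_iter T (preim_family (iter k T) U) n)].
Definition Vals k := [set (\sum_(V \in VV)
  supterm T (f \o iter k T) n (iter k T @^-1` K) V) | VV in Covs k].

Let h := fun y => expR (bsum T f n y).

Let hcont : continuous h.
Proof.
move=> x; apply: continuous_comp; first exact: bsum_cont.
exact: continuous_expR.
Qed.

Let Mx := sup [set h y | y in [set: X]].

Let hM y : h y <= Mx.
Proof.
apply: sup_upper_bound; last by exists y.
apply: compact_has_sup; first by exists (h y), y.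
by apply: continuous_compact => //; exact: continuous_subspaceT.
Qed.

Lemma st_ub k B z : B z -> K (iter k T z) ->
  h (iter k T z) <= supterm T (f \o iter k T) n (iter k T @^-1` K) B.
Proof.
move=> Bz Kz; rewrite /supterm.
have ne : B `&` iter k T @^-1` K !=set0 by exists z.
rewrite (asboolT ne); apply: sup_upper_bound.
  split; first by exists (expR (bsum T (f \o iter k T) n z)), z.
  exists Mx => _ [x _ <-]; rewrite bsum_comp; exact: hM.
by exists z => //; rewrite /h bsum_comp.
Qed.

Lemma st_ge0 k B : 0 <= supterm T (f \o iter k T) n (iter k T @^-1` K) B.
Proof.
case: (pselect (B `&` iter k T @^-1` K !=set0)) => [[z [Bz Kz]]|ne].
  apply: (le_trans _ (st_ub _ _ _ Bz Kz)); exact: ltW (expR_gt0 _).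
by rewrite /supterm asboolF.
Qed.

Lemma Vals_ge0 k a : Vals k a -> 0 <= a.
Proof. by move=> [VV _ <-]; apply: fsumr_ge0 => V _; exact: st_ge0. Qed.

Lemma transfer k k' b : Vals k' b -> exists2 a, Vals k a & a <= b.
Proof.
move=> [W [[Wfin Wb Wcov] Wref] <-].
have : forall B, exists A, W B -> join_iter T U n A /\ B `<=` iter k' T @^-1` A.
  move=> B; case: (pselect (W B)) => WB; last by exists setT.
  have [B' jB' BB'] := Wref B WB.
  have [A jA eA] := join_preim_inv jB'.
  by exists A => _; split => //; rewrite -eA.
move/choice => [Af HAf].
pose s B := supterm T (f \o iter k' T) n (iter k' T @^-1` K) B.
pose C B := Af B `&` [set y | K y -> h y <= s B].
pose phi B := iter k T @^-1` C B.
exists (\sum_(V \in phi @` W) supterm T (f \o iter k T) n (iter k T @^-1` K) V); last first.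
  apply: fsum_image_le => //; last by move=> B _; exact: st_ge0.
  move=> B WB.
  rewrite /supterm; case: asboolP => [ne|_]; last exact: st_ge0.
  apply: ge_sup.
    by case: ne => x Hx; exists (expR (bsum T (f \o iter k T) n x)), x.
  move=> _ [x [[Ax Hx] Kx] <-].
  rewrite bsum_comp; exact: Hx Kx.
exists (phi @` W) => //; split; [split|].
- exact: finite_image.
- move=> _ [B WB <-].
  have -> : phi B = iter k T @^-1` Af B `&`
      (~` (iter k T @^-1` K) `|` (h \o iter k T) @^-1` [set r | r <= s B]).
    apply/seteqP; split => x /=.
      move=> [Ax H]; split => //; have [Kx|nKx] := pselect (K (iter k T x)).
        by right; exact: H Kx.
      by left.
    by move=> [Ax [nK|hle]]; split => // Kx.
  apply: borelI.
    apply: (join_measurable (U := preim_family (iter k T) U) cT);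
      last exact: join_preim (HAf B WB).1.
    move=> _ [A UA <-]; move/continuousP: (iter_cont k cT); apply; exact: oU.
  apply: borelU.
    apply: borelC; apply: borel_closed.
    move/continuous_closedP: (iter_cont k cT); apply.
    exact: (compact_closed (@metric_hausdorff R X) cK).
  apply: borel_closed.
  have chS : continuous (h \o iter k T).
    by move=> x; apply: continuous_comp; [exact: iter_cont|exact: hcont].
  by move/continuous_closedP: chS; apply; exact: closed_le.
- apply/seteqP; split => // x _.
  have [z Hz] := iter_surj k' sT (iter k T x).
  have : [set: X] z by [].
  rewrite -Wcov => -[B WB Bz].
  exists (phi B); first by exists B.
  rewrite /phi /C /=; split; first by rewrite -Hz; exact: (HAf B WB).2 z Bz.
  by rewrite -Hz => Kz; exact: st_ub.
- move=> _ [B WB <-]; exists (iter k T @^-1` Af B).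
    exact: join_preim (HAf B WB).1.
  by move=> x [].
Qed.

End Transfer.

Theorem lemma5p2 (R : realType) (X : metricType R) (T : X -> X) (f : X -> R) :
  compact [set: X] ->
  continuous T -> (forall y : X, exists x : X, T x = y) -> ~ injective T ->
  continuous f ->
  forall (U : set (set X)) (K : set X) (n m : nat),
    is_finite_cover (@open X) U -> compact K ->
    Pn T (f \o iter m T) (preim_family (iter m T) U) (iter m T @^-1` K) n =
    Pn T f U K n.
Proof.
move=> cX cT sT _ cf U K n m [_ oU _] cK.
have eU : preim_family (iter 0 T) U = U.
  apply/seteqP; split => A; first by move=> [B UB <-].
  by move=> UA; exists A.
have -> : Pn T f U K n =
    Pn T (f \o iter 0 T) (preim_family (iter 0 T) U) (iter 0 T @^-1` K) n.
  by rewrite eU.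
apply: inf_eq.
- exact: (@Vals_ge0 R X T f U K n cX cT cf m).
- exact: (@Vals_ge0 R X T f U K n cX cT cf 0).
- exact: (@transfer R X T f U K n cX cT sT cf oU cK m 0).
- exact: (@transfer R X T f U K n cX cT sT cf oU cK 0 m).
Qed.
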